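(* Consider the repeated service game described in the context, with $t>0$, $\tau\in(0,t)$, $c>0$, $d\in(0,1)$, $w\in(0,1)$, and a strictly decreasing utility $\Gamma:[0,1]\to(0,\infty)$. Suppose the price $p$ satisfies $$p=\Gamma(d)\left(1-\frac{\tau}{t}\right)+\frac{c}{1-d}\,\frac{\tau}{t}.$$ Then the cooperation conditions hold if and only if $$w\ \ge\ \frac{c}{(1-d)\Gamma(d)}.$$
   Context: A service provider (SP) and a client interact in rounds of duration $t>0$. The parameters are: trial time $\tau$, SP cost per unit time $c$, price per unit time $p$, channel outage probability $d$, continuation probability (cooperation willingness) $w$, and a client utility function $\Gamma$. When both players use COOP, the long-term payoffs are $$\Pi_s^{\mathrm C}=\frac{(1-d)(p-c)t-dc\tau}{1-(1-d)w},\qquad \Pi_c^{\mathrm C}=\frac{(1-d)(\Gamma(d)-p)t+d\Gamma(d)\tau}{1-(1-d)w}.$$ For an integer $j\ge 2$, the long-term payoff of a player using the defect-and-recover-after-$j$-rounds strategy JDEF$_j$ against COOP is: - for the SP, $$\Pi_s^{(j)}=\frac{(1-d)\big(pt-c\tau-w^{j-1}c(t-\tau)\big)-dc\tau}{1-(1-d)w^{j}};$$ - for the client, $$\Pi_c^{(j)}=\frac{(1-d)\big(\Gamma(d)\tau+w^{j-1}(\Gamma(d)(t-\tau)-pt)\big)+d\Gamma(d)\tau}{1-(1-d)w^{j}}.$$ The cooperation conditions hold when both of the following hold: - $\Pi_s^{\mathrm C}\ge\Pi_s^{(j)}$ for all integers $j\ge2$; - $\Pi_c^{\mathrm C}\ge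 \Pi_c^{(j)}$ for all integers $j\ge 2$. *)

(* Defs.v *)
From Stdlib Require Import Reals.
Open Scope R_scope.

(* Long-term payoffs when both players use COOP. *)
Definition Pi_s_C (t c p d w : R) (tau : R) : R :=
  ((1 - d) * (p - c) * t - d * c * tau) / (1 - (1 - d) * w).

Definition Pi_c_C (t p d w tau : R) (Gamma : R -> R) : R :=
  ((1 - d) * (Gamma d - p) * t + d * Gamma d * tau) / (1 - (1 - d) * w).

(* Long-term payoffs of JDEF_j against COOP (j >= 2). *)
Definition Pi_s_J (j : nat) (t c p d w tau : R) : R :=
  ((1 - d) * (p * t - c * tau - w ^ (j - 1) * c * (t - tau)) - d * c * tau)
  / (1 - (1 - d) * w ^ j).

Definition Pi_c_J (j : nat) (t p d w tau : R) (Gamma : R -> R) : R :=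
  ((1 - d) * (Gamma d * tau + w ^ (j - 1) * (Gamma d * (t - tau) - p * t))
     + d * Gamma d * tau)
  / (1 - (1 - d) * w ^ j).

Definition cooperation_conditions (t tau c p d w : R) (Gamma : R -> R) : Prop :=
  (forall j : nat, (2 <= j)%nat -> Pi_s_C t c p d w tau >= Pi_s_J j t c p d w tau) /\
  (forall j : nat, (2 <= j)%nat -> Pi_c_C t p d w tau Gamma >= Pi_c_J j t p d w tau Gamma).

(* Main.v *)
Require Import Defs.
From Stdlib Require Import Reals Lra Lia Psatz.
Open Scope R_scope.

Lemma core (K G c a w x : R) : 0 < K -> 0 < a < 1 -> 0 < w < 1 -> 0 < x < 1 ->
  (K * (G - c) / (1 - a * w) >= K * (G - x * c) / (1 - a * (w * x)) <-> a * G * w >= c).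
Proof.
  intros HK Ha Hw Hx.
  assert (D1 : 0 < 1 - a * w) by nra.
  assert (D2 : 0 < 1 - a * (w * x)) by (assert (0 < w * x < 1) by nra; nra).
  set (q := K * (1 - x) / ((1 - a * w) * (1 - a * (w * x)))).
  assert (Hq : 0 < q).
  { unfold q. apply Rdiv_lt_0_compat; nra. }
  assert (E : K * (G - c) / (1 - a * w) - K * (G - x * c) / (1 - a * (w * x))
              = q * (a * G * w - c)).
  { unfold q. field. lra. }
  split; intro HH.
  - assert (0 <= q * (a * G * w - c)) by lra. nra.
  - assert (0 <= q * (a * G * w - c)) by nra. lra.
Qed.

Lemma powS_pred (w : R) (j : nat) : (2 <= j)%nat -> w ^ j = w * w ^ (j - 1).
Proof. intros Hj. replace j with (S (j - 1)) at 1 by lia. reflexivity. Qed.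

Lemma pow_lt1 (w : R) (j : nat) : (2 <= j)%nat -> 0 < w < 1 -> 0 < w ^ (j - 1) < 1.
Proof.
  intros Hj Hw. split.
  - apply pow_lt; lra.
  - apply pow_lt_1_compat; [lra | lia].
Qed.

Theorem corollary4 (t tau c d w p : R) (Gamma : R -> R)
  (ht : 0 < t) (htau : 0 < tau < t) (hc : 0 < c)
  (hd : 0 < d < 1) (hw : 0 < w < 1)
  (hGpos : forall x, 0 <= x <= 1 -> 0 < Gamma x)
  (hGdec : forall x y, 0 <= x <= 1 -> 0 <= y <= 1 -> x < y -> Gamma y < Gamma x)
  (hp : p = Gamma d * (1 - tau / t) + c / (1 - d) * (tau / t)) :
  cooperation_conditions t tau c p d w Gamma <->
  w >= c / ((1 - d) * Gamma d).
Proof.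
  assert (HG : 0 < Gamma d) by (apply hGpos; lra).
  set (G := Gamma d) in *.
  assert (Hw : w >= c / ((1 - d) * G) <-> (1 - d) * G * w >= c).
  { assert (HaG : 0 < (1 - d) * G) by nra.
    split; intro HH.
    - apply Rle_ge. apply Rle_trans with ((1 - d) * G * (c / ((1 - d) * G))).
      + right. field. lra.
      + apply Rmult_le_compat_l; lra.
    - apply Rle_ge. unfold Rdiv. apply Rle_trans with (((1 - d) * G * w) * / ((1 - d) * G)).
      + apply Rmult_le_compat_r. left. apply Rinv_0_lt_compat. lra. lra.
      + right. field. lra. }
  assert (Ks : forall j, (2 <= j)%nat ->
     (Pi_s_C t c p d w tau >= Pi_s_J j t c p d w tau <-> (1 - d) * G * w >= c)).
  { intros j Hj. pose proof (pow_lt1 w j Hj hw) as Hx.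
    assert (Hwx : 0 < w * w ^ (j - 1) < 1) by nra.
    unfold Pi_s_C, Pi_s_J. rewrite (powS_pred w j Hj).
    replace (((1 - d) * (p - c) * t - d * c * tau) / (1 - (1 - d) * w))
      with (((1 - d) * (t - tau)) * (G - c) / (1 - (1 - d) * w))
      by (subst p; field; repeat split; nra).
    replace (((1 - d) * (p * t - c * tau - w ^ (j - 1) * c * (t - tau)) - d * c * tau)
       / (1 - (1 - d) * (w * w ^ (j - 1))))
      with (((1 - d) * (t - tau)) * (G - w ^ (j - 1) * c) / (1 - (1 - d) * (w * w ^ (j - 1))))
      by (subst p; field; repeat split; nra).
    apply core; nra. }
  assert (Kc : forall j, (2 <= j)%nat ->
     (Pi_c_C t p d w tau Gamma >= Pi_c_J j t p d w tau Gamma <-> (1 - d) * G * w >= c)).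
  { intros j Hj. pose proof (pow_lt1 w j Hj hw) as Hx.
    assert (Hwx : 0 < w * w ^ (j - 1) < 1) by nra.
    unfold Pi_c_C, Pi_c_J. fold G. rewrite (powS_pred w j Hj).
    replace (((1 - d) * (G - p) * t + d * G * tau) / (1 - (1 - d) * w))
      with (tau * (G - c) / (1 - (1 - d) * w))
      by (subst p; field; repeat split; nra).
    replace (((1 - d) * (G * tau + w ^ (j - 1) * (G * (t - tau) - p * t)) + d * G * tau)
       / (1 - (1 - d) * (w * w ^ (j - 1))))
      with (tau * (G - w ^ (j - 1) * c) / (1 - (1 - d) * (w * w ^ (j - 1))))
      by (subst p; field; repeat split; nra).
    apply core; nra. }
  rewrite Hw. unfold cooperation_conditions. split.
  - intros [H1 _]. apply (Ks 2%nat); auto.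
  - intros H. split; intros j Hj; [apply (Ks j Hj) | apply (Kc j Hj)]; exact H.
Qed.
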